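(* $\mathsf{ICK}\oplus(p\mathrel{\Box\!\!\!\rightarrow} p)$ is sound and complete with respect to the class of conditional frames $(X,\leq,\mathcal{R})$ satisfying $R_a[x]\subseteq a$ for all $x\in X$ and all upsets $a$.
   Context: Formulas: $\phi ::= p\mid\bot\mid\phi\wedge\phi\mid\phi\vee\phi\mid\phi\to\phi\mid\phi\mathrel{\Box\!\!\!\rightarrow}\phi$. $\mathsf{ICK}\oplus\Gamma$ is the smallest set containing intuitionistic propositional logic, $\Gamma$, $(p\mathrel{\Box\!\!\!\rightarrow}(q\wedge r))\leftrightarrow((p\mathrel{\Box\!\!\!\rightarrow} q)\wedge(p\mathrel{\Box\!\!\!\rightarrow} r))$ and $(p\mathrel{\Box\!\!\!\rightarrow}\top)\leftrightarrow\top$, closed under uniform substitution, modus ponens and congruence rules for both arguments of $\mathrel{\Box\!\!\!\rightarrow}$. A conditional frame is $(X,\leq,\mathcal{R})$, $(X,\leq)$ a nonempty preorder, $\mathcal{R}=\{R_a\mid a\text{ an upset}\}$ with $(\leq\circ R_a)\subseteq(R_a\circ\leq)$; valuations assign upsets to letters and $x\models\phi\mathrel{\Box\!\!\!\rightarrow}\psi$ iff every $y$ with $xR_{V(\phi)}y$ satisfies $\psi$. $R_a[x]=\{y\mid xR_ay\}$. *)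

(* Defs.v *)
Inductive form : Set :=
| Var  : nat -> form
| Bot  : form
| And  : form -> form -> form
| Or   : form -> form -> form
| Imp  : form -> form -> form
| Cond : form -> form -> form.

Definition Top : form := Imp Bot Bot.
Definition Iff (a b : form) : form := And (Imp a b) (Imp b a).

Fixpoint subst (s : nat -> form) (f : form) : form :=
  match f with
  | Var n => s n
  | Bot => Bot
  | And a b => And (subst s a) (subst s b)
  | Or a b => Or (subst s a) (subst s b)
  | Imp a b => Imp (subst s a) (subst s b)
  | Cond a b => Cond (subst s a) (subst s b)
  end.

Definition p_ : form := Var 0.
Definition q_ : form := Var 1.
Definition r_ : form := Var 2.

Inductive ICK_id : form -> Prop :=
| ipc_k  a b   : ICK_id (Imp a (Imp b a))
| ipc_s  a b c : ICK_id (Imp (Imp a (Imp b c)) (Imp (Imp a b) (Imp a c)))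
| ipc_ai a b   : ICK_id (Imp a (Imp b (And a b)))
| ipc_ae1 a b  : ICK_id (Imp (And a b) a)
| ipc_ae2 a b  : ICK_id (Imp (And a b) b)
| ipc_oi1 a b  : ICK_id (Imp a (Or a b))
| ipc_oi2 a b  : ICK_id (Imp b (Or a b))
| ipc_oe a b c : ICK_id (Imp (Imp a c) (Imp (Imp b c) (Imp (Or a b) c)))
| ipc_efq a    : ICK_id (Imp Bot a)
| ax_and  : ICK_id (Iff (Cond p_ (And q_ r_)) (And (Cond p_ q_) (Cond p_ r_)))
| ax_top  : ICK_id (Iff (Cond p_ Top) Top)
| ax_id   : ICK_id (Cond p_ p_)
| r_subst s f : ICK_id f -> ICK_id (subst s f)
| r_mp a b : ICK_id (Imp a b) -> ICK_id a -> ICK_id b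
| r_congl a b c : ICK_id (Iff a b) -> ICK_id (Iff (Cond a c) (Cond b c))
| r_congr a b c : ICK_id (Iff a b) -> ICK_id (Iff (Cond c a) (Cond c b)).

Definition upset {X : Type} (le : X -> X -> Prop) (a : X -> Prop) : Prop :=
  forall x y, le x y -> a x -> a y.

(** Conditional frames (X, <=, R).  R a is only constrained (and only used)
    for upsets a.  Coherence: (<= ; R_a) included in (R_a ; <=), i.e.
    x <= x' and x' R_a z imply x R_a y <= z for some y. *)
Record cframe : Type := {
  W : Type;
  le : W -> W -> Prop;
  le_refl : forall x, le x x;
  le_trans : forall x y z, le x y -> le y z -> le x z;
  W_nonempty : inhabited W;
  R : (W -> Prop) -> W -> W -> Prop;
  R_coh : forall a, upset le a ->
    forall x x' z, le x x' -> R a x' z -> exists y, R a x y /\ le y z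
}.

Fixpoint sat (F : cframe) (V : nat -> W F -> Prop) (x : W F) (f : form) : Prop :=
  match f with
  | Var n => V n x
  | Bot => False
  | And a b => sat F V x a /\ sat F V x b
  | Or a b => sat F V x a \/ sat F V x b
  | Imp a b => forall y, le F x y -> sat F V y a -> sat F V y b
  | Cond a b => forall y, R F (fun z => sat F V z a) x y -> sat F V y b
  end.

Definition valuation (F : cframe) (V : nat -> W F -> Prop) : Prop :=
  forall n, upset (le F) (V n).

Definition valid_in (F : cframe) (f : form) : Prop :=
  forall V, valuation F V -> forall x, sat F V x f.

Definition cond_reflexive (F : cframe) : Prop :=
  forall a, upset (le F) a -> forall x y, R F a x y -> a y.

(* Main.v *)
Require Import Defs.
From Stdlib Require Import Classical FunctionalExtensionality PropExtensionality List Arith Lia Cantor.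
Import ListNotations.

Section Sound.
Variable F : cframe.
Variable V : nat -> W F -> Prop.
Hypothesis HV : valuation F V.

Lemma persist : forall f x y, le F x y -> sat F V x f -> sat F V y f.
Proof.
  induction f; simpl; intros x y Hxy H.
  - exact (HV n x y Hxy H).
  - exact H.
  - destruct H; split; eauto.
  - destruct H; [left|right]; eauto.
  - intros z Hyz Hz. apply H; [eapply le_trans; eauto | exact Hz].
  - intros z Hz.
    assert (Hup : upset (le F) (fun z => sat F V z f1)) by (intros u v; apply IHf1).
    destruct (R_coh F _ Hup x y z Hxy Hz) as [w [Hw1 Hw2]].
    eapply IHf2; [exact Hw2|]. apply H; exact Hw1.
Qed.
End Sound.

Lemma sat_subst F V s : forall f x,
  sat F V x (subst s f) <-> sat F (fun n z => sat F V z (s n)) x f.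
Proof.
  induction f; simpl; intros x; try tauto.
  - rewrite IHf1, IHf2; tauto.
  - rewrite IHf1, IHf2; tauto.
  - split; intros H y Hy; specialize (H y Hy); rewrite ?IHf1, ?IHf2 in *; tauto.
  - assert (E : (fun z => sat F V z (subst s f1)) = (fun z => sat F (fun n z => sat F V z (s n)) z f1)).
    { apply functional_extensionality; intro z; apply propositional_extensionality; apply IHf1. }
    rewrite E. split; intros H y Hy; specialize (H y Hy); apply IHf2; auto; apply IHf2; auto.
Qed.

Lemma soundness : forall f, ICK_id f -> forall F, cond_reflexive F -> valid_in F f.
Proof.
  induction 1; intros F HF V HV x; simpl in *.
  - intros y Hxy Ha z Hyz Hb. eapply persist; eauto.
  - intros y Hxy H1 z Hyz H2 u Hzu Hu.
    assert (Hyu : le F y u) by (eapply le_trans; eauto).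
    eapply (H1 u Hyu Hu u (le_refl F u)). apply H2; auto.
  - intros y Hxy Ha z Hyz Hb. split; [eapply persist; eauto| exact Hb].
  - intros y _ [H _]; exact H.
  - intros y _ [_ H]; exact H.
  - intros y _ H; left; exact H.
  - intros y _ H; right; exact H.
  - intros y Hxy H1 z Hyz H2 u Hzu [Hu|Hu].
    + apply H1; [eapply le_trans; eauto | exact Hu].
    + apply H2; [exact Hzu | exact Hu].
  - intros y _ [].
  - split.
    + intros y _ H; split; intros z Hz; apply (H z Hz).
    + intros y _ [H1 H2] z Hz; split; auto.
  - split.
    + intros y _ _ z _ [].
    + intros y _ _ z _ u _ [].
  - intros y Hy. exact (HF (fun z => V 0 z) (HV 0) x y Hy).
  - apply sat_subst. apply IHICK_id; auto.
    intros n u v Huv; apply persist; auto.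
  - apply (IHICK_id1 F HF V HV x x (le_refl F x)). apply IHICK_id2; auto.
  - assert (E : (fun z => sat F V z a) = (fun z => sat F V z b)).
    { apply functional_extensionality; intro z; apply propositional_extensionality.
      destruct (IHICK_id F HF V HV z) as [H1 H2]. split; intro.
      apply (H1 z (le_refl F z)); auto. apply (H2 z (le_refl F z)); auto. }
    rewrite E. split; intros y _ H'; exact H'.
  - assert (E : forall z, sat F V z a <-> sat F V z b).
    { intro z; destruct (IHICK_id F HF V HV z) as [H1 H2]. split; intro.
      apply (H1 z (le_refl F z)); auto. apply (H2 z (le_refl F z)); auto. }
    split; intros y _ H' z Hz; apply E; apply H'; exact Hz.
Qed.

Inductive Thm (G : form -> Prop) : form -> Prop :=
| T_ax f : ICK_id f -> Thm G f
| T_hyp f : G f -> Thm G f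
| T_mp a b : Thm G (Imp a b) -> Thm G a -> Thm G b.

Lemma Thm_mono (G H : form -> Prop) f : (forall x, G x -> H x) -> Thm G f -> Thm H f.
Proof. intros GH D; induction D; [apply T_ax|apply T_hyp|eapply T_mp]; eauto. Qed.

Lemma ICK_I a : ICK_id (Imp a a).
Proof.
  eapply r_mp; [eapply r_mp; [apply (ipc_s a (Imp a a) a)| apply ipc_k] | apply (ipc_k a a)].
Qed.

Lemma deduction G a b : Thm (fun x => G x \/ x = a) b -> Thm G (Imp a b).
Proof.
  intro D; induction D.
  - eapply T_mp; [apply T_ax, ipc_k | apply T_ax; auto].
  - destruct H as [H|H].
    + eapply T_mp; [apply T_ax, ipc_k | apply T_hyp; auto].
    + subst; apply T_ax, ICK_I.
  - eapply T_mp; [eapply T_mp; [apply T_ax, ipc_s| exact IHD1] | exact IHD2].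
Qed.

Lemma Thm_empty f : Thm (fun _ => False) f -> ICK_id f.
Proof. induction 1; [auto|contradiction|eapply r_mp; eauto]. Qed.

Lemma ICK_imp a b : Thm (fun x => x = a) b -> ICK_id (Imp a b).
Proof.
  intro D. apply Thm_empty, deduction. eapply Thm_mono; [|exact D]. simpl; auto.
Qed.

Lemma ICK_iff a b : ICK_id (Imp a b) -> ICK_id (Imp b a) -> ICK_id (Iff a b).
Proof. intros; eapply r_mp; [eapply r_mp; [apply ipc_ai|]|]; eauto. Qed.

Lemma iff1 a b : ICK_id (Iff a b) -> ICK_id (Imp a b).
Proof. intros; eapply r_mp; [apply ipc_ae1|]; eauto. Qed.
Lemma iff2 a b : ICK_id (Iff a b) -> ICK_id (Imp b a).
Proof. intros; eapply r_mp; [apply ipc_ae2|]; eauto. Qed.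

Definition sb3 (a b c : form) (n : nat) : form :=
  match n with 0 => a | 1 => b | 2 => c | _ => Var n end.

Lemma ax_and' a b c : ICK_id (Iff (Cond a (And b c)) (And (Cond a b) (Cond a c))).
Proof. exact (r_subst (sb3 a b c) _ ax_and). Qed.
Lemma ax_top' a : ICK_id (Iff (Cond a Top) Top).
Proof. exact (r_subst (sb3 a a a) _ ax_top). Qed.
Lemma ax_id' a : ICK_id (Cond a a).
Proof. exact (r_subst (sb3 a a a) _ ax_id). Qed.

Lemma ICK_Top : ICK_id Top.
Proof. apply ipc_efq. Qed.

Lemma nec a b : ICK_id b -> ICK_id (Cond a b).
Proof.
  intro Hb.
  assert (E : ICK_id (Iff Top b)).
  { apply ICK_iff; eapply r_mp; try apply ipc_k; auto; apply ICK_Top. }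
  eapply r_mp; [apply iff1, r_congr, E|].
  eapply r_mp; [apply (iff2 _ _ (ax_top' a))| apply ICK_Top].
Qed.

Lemma cmono a b c : ICK_id (Imp b c) -> ICK_id (Imp (Cond a b) (Cond a c)).
Proof.
  intro H.
  assert (E : ICK_id (Iff b (And b c))).
  { apply ICK_iff; [|apply ipc_ae1].
    apply ICK_imp. eapply T_mp; [eapply T_mp; [apply T_ax, ipc_ai|]|].
    apply T_hyp; auto. eapply T_mp; [apply T_ax, H| apply T_hyp; auto]. }
  apply ICK_imp.
  eapply T_mp; [apply T_ax, ipc_ae2|].
  eapply T_mp; [apply T_ax, iff1, ax_and'|].
  eapply T_mp; [apply T_ax, iff1, r_congr, E|]. apply T_hyp; auto.
Qed.

Fixpoint Lf (n : nat) : list form :=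
  match n with
  | 0 => [Bot; Var 0]
  | S m => let l := Lf m in
      Bot :: Var (S m) :: l ++
      flat_map (fun x => flat_map (fun y => [And x y; Or x y; Imp x y; Cond x y]) l) l
  end.

Lemma Lf_S n f : In f (Lf n) -> In f (Lf (S n)).
Proof. intro H; simpl; right; right; apply in_or_app; auto. Qed.

Lemma Lf_mono n m f : n <= m -> In f (Lf n) -> In f (Lf m).
Proof. induction 1; auto using Lf_S. Qed.

Lemma Lf_all f : exists n, In f (Lf n).
Proof.
  assert (bin : forall (g : form -> form -> form) a b,
    (forall x y, g x y = And x y \/ g x y = Or x y \/ g x y = Imp x y \/ g x y = Cond x y) ->
    (exists n, In a (Lf n)) -> (exists n, In b (Lf n)) -> exists n, In (g a b) (Lf n)).
  { intros g a b Hg [n1 H1] [n2 H2]. exists (S (max n1 n2)). simpl; right; right.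
    apply in_or_app; right. apply in_flat_map. exists a; split.
    eapply Lf_mono; [|exact H1]; lia.
    apply in_flat_map. exists b; split. eapply Lf_mono; [|exact H2]; lia.
    destruct (Hg a b) as [E|[E|[E|E]]]; rewrite E; simpl; tauto. }
  induction f.
  - exists n; destruct n; simpl; auto.
  - exists 0; simpl; auto.
  - apply (bin And); auto.
  - apply (bin Or); auto.
  - apply (bin Imp); auto.
  - apply (bin Cond); auto.
Qed.

Definition enum (k : nat) : form := let (n, i) := Cantor.of_nat k in nth i (Lf n) Bot.

Lemma enum_surj f : exists k, enum k = f.
Proof.
  destruct (Lf_all f) as [n H]. destruct (In_nth _ _ Bot H) as [i [_ Hi]].
  exists (Cantor.to_nat (n, i)). unfold enum. rewrite Cantor.cancel_of_to. exact Hi.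
Qed.

Record world : Type := {
  T : form -> Prop;
  T_closed : forall f, Thm T f -> T f;
  T_prime : forall a b, T (Or a b) -> T a \/ T b;
  T_cons : ~ T Bot
}.

Section Lind.
Variable G : form -> Prop.
Variable phi : form.
Hypothesis Hnot : ~ Thm G phi.

Fixpoint chain (n : nat) : form -> Prop :=
  match n with
  | 0 => G
  | S m => fun x => chain m x \/ (x = enum m /\ ~ Thm (fun y => chain m y \/ y = enum m) phi)
  end.

Lemma chain_mono n m x : n <= m -> chain n x -> chain m x.
Proof. induction 1; simpl; auto. Qed.

Lemma chain_not n : ~ Thm (chain n) phi.
Proof.
  induction n; simpl; auto.
  destruct (classic (Thm (fun y => chain n y \/ y = enum n) phi)) as [H|H].
  - intro D; apply IHn. eapply Thm_mono; [|exact D]. simpl. intros x [Hx|[_ Hx]]; tauto.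
  - intro D; apply H. eapply Thm_mono; [|exact D]. simpl. intros x [Hx|[Hx _]]; auto.
Qed.

Definition lim (x : form) : Prop := exists n, chain n x.

Lemma lim_compact f : Thm lim f -> exists n, Thm (chain n) f.
Proof.
  induction 1.
  - exists 0; apply T_ax; auto.
  - destruct H as [n Hn]; exists n; apply T_hyp; auto.
  - destruct IHThm1 as [n1 H1]; destruct IHThm2 as [n2 H2]. exists (max n1 n2).
    eapply T_mp; eapply Thm_mono; try eassumption; intros x Hx; eapply chain_mono; try exact Hx; lia.
Qed.

Lemma lim_not : ~ Thm lim phi.
Proof. intro D; destruct (lim_compact _ D) as [n Hn]; exact (chain_not n Hn). Qed.

Lemma lim_step a n : enum n = a -> ~ lim a -> Thm (fun y => lim y \/ y = a) phi.
Proof.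
  intros E Hna.
  destruct (classic (Thm (fun y => chain n y \/ y = enum n) phi)) as [H|H].
  - eapply Thm_mono; [|exact H]. intros x [Hx|Hx]; [left; exists n; auto| right; congruence].
  - exfalso; apply Hna. exists (S n). simpl. right; auto.
Qed.

Lemma lim_closed f : Thm lim f -> lim f.
Proof.
  intro D. destruct (enum_surj f) as [n E].
  apply NNPP; intro Hn. apply lim_not.
  eapply T_mp; [apply deduction, (lim_step f n E Hn)| exact D].
Qed.

Lemma lim_prime a b : lim (Or a b) -> lim a \/ lim b.
Proof.
  intro H. apply NNPP; intro Hn. apply lim_not.
  destruct (enum_surj a) as [n En]; destruct (enum_surj b) as [m Em].
  assert (Ha := deduction _ _ _ (lim_step a n En (fun h => Hn (or_introl h)))).
  assert (Hb := deduction _ _ _ (lim_step b m Em (fun h => Hn (or_intror h)))).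
  eapply T_mp; [eapply T_mp; [eapply T_mp; [apply T_ax, ipc_oe|exact Ha]|exact Hb]| apply T_hyp; exact H].
Qed.

Lemma lim_cons : ~ lim Bot.
Proof.
  intro H; apply lim_not. eapply T_mp; [apply T_ax, ipc_efq| apply T_hyp; exact H].
Qed.

Definition lindworld : world := {| T := lim; T_closed := lim_closed; T_prime := lim_prime; T_cons := lim_cons |}.

Lemma lind_sub x : G x -> T lindworld x.
Proof. intro; exists 0; auto. Qed.
Lemma lind_not : ~ T lindworld phi.
Proof. intro H; apply lim_not, T_hyp, H. Qed.
End Lind.

Lemma lindenbaum G phi : ~ Thm G phi ->
  exists w : world, (forall x, G x -> T w x) /\ ~ T w phi.
Proof. intro H; exists (lindworld G phi H); split; [apply lind_sub| apply lind_not]. Qed.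

Definition wle (u v : world) : Prop := forall f, T u f -> T v f.
Definition cR (a : world -> Prop) (u v : world) : Prop :=
  exists phi, (forall w, a w <-> T w phi) /\ (forall psi, T u (Cond phi psi) -> T v psi).

Lemma T_thm (u : world) f : ICK_id f -> T u f.
Proof. intro; apply T_closed, T_ax; auto. Qed.
Lemma T_mp' (u : world) a b : T u (Imp a b) -> T u a -> T u b.
Proof. intros; apply T_closed; eapply T_mp; apply T_hyp; eauto. Qed.

Definition canon (w0 : world) : cframe.
Proof.
  refine {| W := world; le := wle; R := cR; W_nonempty := inhabits w0 |}.
  - intros x f H; exact H.
  - intros x y z H1 H2 f H; auto.
  - intros a _ x x' z Hxx' [phi [H1 H2]]. exists z; split.
    + exists phi; split; auto.
    + intros f H; exact H.
Defined.

Lemma canon_refl w0 : cond_reflexive (canon w0).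
Proof.
  intros a _ x y [phi [H1 H2]]. apply H1, H2, T_thm, ax_id'.
Qed.

Definition cV (w0 : world) : nat -> W (canon w0) -> Prop := fun n w => T w (Var n).

Lemma cV_val w0 : valuation (canon w0) (cV w0).
Proof. intros n x y H; apply H. Qed.

Lemma Cond_lemma (u : world) a x :
  Thm (fun t => T u (Cond a t)) x -> T u (Cond a x).
Proof.
  induction 1.
  - apply T_thm, nec; auto.
  - auto.
  - eapply T_mp'; [apply T_thm, (cmono a (And (Imp a0 b) a0))|].
    + apply ICK_imp. eapply T_mp with (a := a0).
      * eapply T_mp; [apply T_ax, ipc_ae1| apply T_hyp; reflexivity].
      * eapply T_mp; [apply T_ax, ipc_ae2| apply T_hyp; reflexivity].
    + eapply T_mp'; [apply T_thm, iff2, ax_and'|].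
      eapply T_mp'; [eapply T_mp'; [apply T_thm, ipc_ai|]|]; eauto.
Qed.

Lemma equiv_worlds a b : (forall w : world, T w a -> T w b) -> ICK_id (Imp a b).
Proof.
  intro H. apply NNPP; intro Hn.
  assert (Hn' : ~ Thm (fun x => x = a) b) by (intro D; apply Hn, ICK_imp, D).
  destruct (lindenbaum _ _ Hn') as [w [H1 H2]]. apply H2, H, H1; reflexivity.
Qed.

Lemma truth w0 : forall f (u : world), sat (canon w0) (cV w0) u f <-> T u f.
Proof.
  induction f; intro u; simpl.
  - unfold cV; tauto.
  - split; [tauto| apply T_cons].
  - rewrite IHf1, IHf2. split.
    + intros [H1 H2]. eapply T_mp'; [eapply T_mp'; [apply T_thm, ipc_ai|]|]; eauto.
    + intro H; split; (eapply T_mp'; [apply T_thm|exact H]); [apply ipc_ae1|apply ipc_ae2].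
  - rewrite IHf1, IHf2. split.
    + intros [H|H]; (eapply T_mp'; [apply T_thm|exact H]); [apply ipc_oi1|apply ipc_oi2].
    + apply T_prime.
  - split.
    + intro H. apply NNPP; intro Hn.
      assert (Hn' : ~ Thm (fun x => T u x \/ x = f1) f2).
      { intro D; apply Hn, T_closed, deduction; exact D. }
      destruct (lindenbaum _ _ Hn') as [v [H1 H2]].
      apply H2, IHf2, H.
      * intros g Hg; apply H1; auto.
      * apply IHf1, H1; auto.
    + intros H v Huv Hv. apply IHf2. eapply T_mp'; [apply Huv, H| apply IHf1, Hv].
  - split.
    + intro H. apply NNPP; intro Hn.
      assert (Hn' : ~ Thm (fun t => T u (Cond f1 t)) f2).
      { intro D; apply Hn, Cond_lemma, D. }
      destruct (lindenbaum _ _ Hn') as [v [H1 H2]].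
      apply H2, IHf2, H. exists f1; split; auto.
    + intros H v [chi [H1 H2]]. apply IHf2, H2.
      assert (E : ICK_id (Iff f1 chi)).
      { apply ICK_iff; apply equiv_worlds; intros w Hw.
        - apply (proj1 (H1 w)), (proj2 (IHf1 w)), Hw.
        - apply (proj1 (IHf1 w)), (proj2 (H1 w)), Hw. }
      eapply T_mp'; [apply T_thm, iff1, r_congl, E| exact H].
Qed.

Theorem proposition5p4 :
  forall f : form,
    ICK_id f <-> (forall F : cframe, cond_reflexive F -> valid_in F f).
Proof.
  intro f; split.
  - intros H F HF; apply soundness; auto.
  - intro H. apply NNPP; intro Hn.
    assert (Hn' : ~ Thm (fun _ => False) f) by (intro D; apply Hn, Thm_empty, D).
    destruct (lindenbaum _ _ Hn') as [w [_ Hw]].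
    apply Hw, (truth w), H; [apply canon_refl| apply cV_val].
Qed.
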